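(* Let $W$ be an sc-Banach space, $E=\mathbb R^n\oplus W$ and $C=[0,\infty)^n\oplus W$. If a finite-dimensional subspace $N\subset E$ is neat with respect to $C$, then $N$ is in good position to $C$ and $C\cap N$ is a partial quadrant in $N$.
   Context: An sc-Banach space is a Banach space $W$ with a nested sequence of Banach spaces $W=W_0\supset W_1\supset\cdots$ with compact inclusions $W_n\to W_m$ ($m<n$) and $\bigcap W_m$ dense in each $W_m$; $E=\mathbb R^n\oplus W$ has levels $\mathbb R^n\oplus W_m$, and $\|\cdot\|$ is its level-$0$ norm. An sc-complement of a closed subspace $N$ is a closed subspace $N^\perp$ with $E_m=(N\cap E_m)\oplus(N^\perp\cap E_m)$ topologically for every $m$, both being sc-subspaces (i.e. their intersections with the levels form sc-structures). A finite-dimensional subspace $N$ is neat with respect to $C$ if it has an sc-complement $N^\perp$ with $N^\perp\subset C$. $N$ is in good position to $C$ if $N\cap C$ has nonempty interior in $N$ and there exist an sc-complement $N^\perp$ and $c>0$ such that for $(n,m)\in N\oplus N^\perp$ with $\|m\|\le c\|n\|$: $n+m\in C$ iff $n\in C$. A partial quadrant in a finite-dimensional space $N$ is the image of $[0,\infty)^k\oplus\mathbb R^{d-k}$ under a linear isomorphism $\mathbb R^d\to N$. *)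

(* Defs.v *)
From HB Require Import structures.
From mathcomp Require Import all_boot all_order all_algebra.
From mathcomp Require Import all_classical all_reals all_analysis.
Set Implicit Arguments. Unset Strict Implicit. Unset Printing Implicit Defensive.
Import Order.TTheory GRing.Theory Num.Theory.
Import numFieldNormedType.Exports.
Local Open Scope classical_set_scope.
Local Open Scope ring_scope.

Section Generic.
Variables (R : realType) (V : lmodType R).

Definition lin_subspace (A : set V) : Prop :=
  A 0 /\ forall (a : R) x y, A x -> A y -> A (a *: x + y).

Definition is_norm_on (A : set V) (nrm : V -> R) : Prop :=
  [/\ forall x, A x -> 0 <= nrm x,
      forall x, A x -> nrm x = 0 -> x = 0,
      forall (a : R) x, A x -> nrm (a *: x) = `|a| * nrm x
    & forall x y, A x -> A y -> nrm (x + y) <= nrm x + nrm y].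

Definition cvg_nrm (nrm : V -> R) (u : nat -> V) (x : V) : Prop :=
  (fun k => nrm (u k - x)) @ \oo --> (0 : R).

Definition cauchy_nrm (nrm : V -> R) (u : nat -> V) : Prop :=
  forall e : R, 0 < e -> exists N : nat, forall j k : nat,
    (N <= j)%N -> (N <= k)%N -> nrm (u j - u k) < e.

Definition complete_nrm (A : set V) (nrm : V -> R) : Prop :=
  forall u : nat -> V, (forall k, A (u k)) -> cauchy_nrm nrm u ->
    exists2 x, A x & cvg_nrm nrm u x.

Definition closed_nrm (A S : set V) (nrm : V -> R) : Prop :=
  forall (u : nat -> V) x, (forall k, A (u k)) -> S x -> cvg_nrm nrm u x -> A x.

Definition dense_nrm (D S : set V) (nrm : V -> R) : Prop :=
  forall x, S x -> forall e : R, 0 < e -> exists2 y, D y & nrm (x - y) < e.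

Definition compact_incl (S1 : set V) (n1 : V -> R) (S2 : set V) (n2 : V -> R)
  : Prop :=
  S1 `<=` S2 /\
  forall u : nat -> V, (forall k, S1 (u k)) ->
    (exists M : R, forall k, n1 (u k) <= M) ->
    exists phi : nat -> nat, (forall k, (phi k < phi k.+1)%N) /\
      exists2 x, S2 x & cvg_nrm n2 (u \o phi) x.

Definition is_sc_structure (lev : nat -> set V) (nrm : nat -> V -> R) : Prop :=
  [/\ forall m, lin_subspace (lev m),
      forall m, is_norm_on (lev m) (nrm m),
      forall m, complete_nrm (lev m) (nrm m),
      forall m k, (m < k)%N -> compact_incl (lev k) (nrm k) (lev m) (nrm m)
    & forall m, dense_nrm (\bigcap_k lev k) (lev m) (nrm m)].

Definition topo_direct_sum (S A B : set V) (nrm : V -> R) : Prop :=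
  [/\ A `<=` S, B `<=` S,
      forall x, S x -> exists a b, [/\ A a, B b & x = a + b],
      forall x, A x -> B x -> x = 0
    & exists K : R, forall a b, A a -> B b -> nrm a <= K * nrm (a + b)].

End Generic.

Definition sc_Banach (R : realType) (W : normedModType R)
  (lev : nat -> set W) (nrm : nat -> W -> R) : Prop :=
  [/\ lev 0%N = setT, (forall x, nrm 0%N x = `|x|) & is_sc_structure lev nrm].

Section Ambient.
Variables (R : realType) (W : normedModType R) (n : nat).
Variables (lev : nat -> set W) (nrm : nat -> W -> R).

Notation Esp := (matrix R 1 n * W)%type.

Definition Elev (m : nat) : set Esp := [set x | lev m x.2].
Definition Enrm (m : nat) (x : Esp) : R := Num.max `|x.1| (nrm m x.2).

Definition Cquad : set Esp := [set x : Esp | forall i : 'I_n, 0 <= (x.1 : 'rV[R]_n) ord0 i].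

Definition finite_dim (N : set Esp) : Prop :=
  exists (d : nat) (b : 'I_d -> Esp),
    N = [set x | exists c : 'I_d -> R, x = \sum_(i < d) c i *: b i].

Definition sc_subspace (F : set Esp) : Prop :=
  is_sc_structure (fun m => F `&` Elev m) Enrm.

Definition sc_complement (N N' : set Esp) : Prop :=
  [/\ lin_subspace N', closed_nrm N' setT (Enrm 0%N),
      forall m, topo_direct_sum (Elev m) (N `&` Elev m) (N' `&` Elev m) (Enrm m),
      sc_subspace N & sc_subspace N'].

Definition neat (N : set Esp) (C : set Esp) : Prop :=
  exists N', sc_complement N N' /\ N' `<=` C.

Definition good_position (N : set Esp) (C : set Esp) : Prop :=
  (exists2 x, (N `&` C) x &
     exists2 e : R, 0 < e & forall y, N y -> Enrm 0%N (y - x) < e -> C y) /\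
  exists N', sc_complement N N' /\
    exists2 c : R, 0 < c & forall u v, N u -> N' v ->
      Enrm 0%N v <= c * Enrm 0%N u -> (C (u + v) <-> C u).

Definition partial_quadrant (N : set Esp) (Q : set Esp) : Prop :=
  exists (d k : nat) (L : 'rV[R]_d -> Esp),
    [/\ (k <= d)%N,
        forall (a : R) u v, L (a *: u + v) = a *: L u + L v,
        injective L,
        L @` setT = N
      & Q = L @` [set v : 'rV[R]_d | forall i : 'I_d, (i < k)%N -> 0 <= v ord0 i]].

End Ambient.

(* Main.v *)
Require Import Defs.
From HB Require Import structures.
From mathcomp Require Import all_boot all_order all_algebra.
From mathcomp Require Import all_classical all_reals all_analysis.
Set Implicit Arguments. Unset Strict Implicit. Unset Printing Implicit Defensive.
Import Order.TTheory GRing.Theory Num.Theory.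
Import numFieldNormedType.Exports.
Local Open Scope classical_set_scope.
Local Open Scope ring_scope.
Definition islin (R : fieldType) (U V : lmodType R) (f : U -> V) :=
  forall (a : R) u v, f (a *: u + v) = a *: f u + f v.

Section Lin.
Variables (R : fieldType) (U V : lmodType R) (f : U -> V).
Hypothesis hf : islin f.
Lemma lin0 : f 0 = 0.
Proof. by have := hf (-1) 0 0; rewrite scaler0 add0r scaleN1r addNr. Qed.
Lemma linD u v : f (u + v) = f u + f v.
Proof. by have := hf 1 u v; rewrite !scale1r. Qed.
Lemma linZ a u : f (a *: u) = a *: f u.
Proof. by rewrite -[a *: u]addr0 hf lin0 addr0. Qed.
Lemma linN u : f (- u) = - f u.
Proof. by rewrite -scaleN1r linZ scaleN1r. Qed.
Lemma linB u v : f (u - v) = f u - f v.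
Proof. by rewrite linD linN. Qed.
End Lin.

Lemma basis_lemma (R : fieldType) (V : lmodType R) (d0 : nat) :
  forall f : 'rV[R]_d0 -> V, islin f ->
  exists d (L : 'rV[R]_d -> V), [/\ islin L, injective L &
    forall x, (exists u, x = f u) <-> (exists z, x = L z)].
Proof.
elim: d0 => [|d0 IH] f hf.
  exists 0%N, f; split => // u v _; by rewrite (thinmx0 u) (thinmx0 v).
pose g (u : 'rV[R]_d0) := f (row_mx (0 : 'rV[R]_1) u).
have hg : islin g.
  move=> a u v; rewrite /g -(linZ hf) -(linD hf); congr f.
  apply/matrixP => i j; rewrite !mxE; case: splitP => k _; rewrite !mxE //.
  by rewrite mulr0 addr0.
pose b := f (row_mx (1 : 'rV[R]_1) 0).
pose ls (u : 'rV[R]_(1 + d0)) := lsubmx u.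
pose rs (u : 'rV[R]_(1 + d0)) := rsubmx u.
have fE : forall u : 'rV[R]_d0.+1, f u = (ls u) 0 0 *: b + g (rs u).
  move=> u; pose u' : 'rV[R]_(1 + d0) := u.
  rewrite -[u]/u' -{1}(hsubmxK u') /ls /rs /g /b -(linZ hf) -(linD hf); congr f.
  apply/matrixP => i j; rewrite !mxE; case: splitP => k _; rewrite !mxE.
    by rewrite !ord1 /= mulr1 addr0.
  by rewrite mulr0 add0r.
have [d [L' [hL' iL' imL']]] := IH g hg.
have [[z0 bz0]|nb] := pselect (exists z, b = L' z).
  exists d, L'; split => // x; split.
    move=> [u ->]; move: u => /= u; rewrite (fE u).
    have [z ->] : exists z, g (rs u) = L' z by apply/imL'; exists (rs u).
    by exists (ls u 0 0 *: z0 + z); rewrite hL' bz0.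
  move=> /imL' [u ->]; by exists (row_mx (0 : 'rV[R]_1) u).
pose L (w : 'rV[R]_(1 + d)) := (lsubmx w) 0 0 *: b + L' (rsubmx w).
have hL : islin L.
  move=> a u v; rewrite /L.
  have -> : rsubmx (a *: u + v) = a *: rsubmx u + rsubmx v.
    by apply/matrixP => i j; rewrite !mxE.
  rewrite hL' !mxE scalerDl -scalerA scalerDr addrACA //.
exists (1 + d)%N, L; split => //.
  move=> u v Luv; apply/eqP; rewrite -subr_eq0; apply/eqP.
  have : L (u - v) = 0 by rewrite (linB hL) Luv subrr.
  move: (u - v) => w; rewrite /L => Lw.
  have c0 : lsubmx w 0 0 = 0.
    apply/eqP/negP => /negP c0; apply: nb.
    exists (- (lsubmx w 0 0)^-1 *: rsubmx w).
    rewrite (linZ hL') scaleNr -scalerN; apply: (@scalerI _ _ (lsubmx w 0 0)) => //.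
    rewrite scalerA mulfV // scale1r; apply/eqP; rewrite -subr_eq0 opprK; exact/eqP.
  move: Lw; rewrite c0 scale0r add0r -(lin0 hL') => /iL' r0.
  rewrite -(hsubmxK w) r0 (mx11_scalar (lsubmx w)) c0 -(scalemx1 _ 0) scale0r.
  by rewrite row_mx0.
move=> x; split.
  move=> [u ->]; rewrite (fE u).
  have [z ->] : exists z, g (rs u) = L' z by apply/imL'; exists (rs u).
  exists (row_mx (ls u 0 0)%:M z); rewrite /L row_mxKl row_mxKr mxE /=.
  by rewrite mxE eqxx mulr1n.
move=> [w ->]; rewrite /L.
have [u ->] : exists u, L' (rsubmx w) = g u by apply/imL'; exists (rsubmx w).
exists (row_mx (lsubmx w) u); rewrite fE /ls /rs row_mxKl row_mxKr //.
Qed.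

Lemma entry_le (R : realType) n (v : 'rV[R]_n) i : `|v 0 i| <= `|v|.
Proof.
have -> : `|v| = mx_norm v by [].
by rewrite mx_normrE; apply/bigmax_geP; right => /=; exists (0, i).
Qed.

Theorem proposition6p2 (R : realType) (W : normedModType R) (n : nat)
  (lev : nat -> set W) (nrm : nat -> W -> R) (N : set ('rV[R]_n * W)%type) :
  sc_Banach lev nrm ->
  lin_subspace N -> @finite_dim R W n N ->
  @neat R W n lev nrm N (@Cquad R W n) ->
  @good_position R W n lev nrm N (@Cquad R W n) /\
  @partial_quadrant R W n N (@Cquad R W n `&` N).
Proof.
move=> [lev0 _ _] [N0 Nlin] [d0 [b hNb]] [N' [hcomp N'C]].
have hcomp' := hcomp; move: hcomp' => [[N'0 N'lin] _ hds _ _].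
have [_ _ hdec _ _] := hds 0%N.
rewrite /Elev lev0 in hdec.
have N'fst : forall v, N' v -> v.1 = 0.
  move=> v Nv; have Nmv : N' (- v) by have := N'lin (-1) v 0 Nv N'0; rewrite addr0 scaleN1r.
  apply/matrixP => i j; rewrite (ord1 i) mxE.
  have h1 := N'C _ Nv j; have h2 := N'C _ Nmv j.
  apply/eqP; rewrite eq_le h1 andbT; move: h2 => /=.
  by rewrite mxE oppr_ge0.
have pre : forall r : 'rV[R]_n, exists a, N a /\ a.1 = r.
  move=> r; have [a [c [[Na _] [Nc _] e]]] := hdec (r, 0) I.
  exists a; split => //; move: e => /(congr1 fst) /= ->.
  by rewrite (N'fst _ Nc) addr0.
have ND : forall x y, N x -> N y -> N (x + y).
  by move=> x y Nx Ny; have := Nlin 1 x y Nx Ny; rewrite scale1r.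
have NZ : forall (a : R) x, N x -> N (a *: x).
  by move=> a x Nx; have := Nlin a x 0 Nx N0; rewrite addr0.
have NS : forall (I : finType) (F : I -> _), (forall i, N (F i)) -> N (\sum_i F i).
  move=> I F NF; elim/big_ind: _ => //.
have fstS : forall (I : finType) (F : I -> ('rV[R]_n * W)%type),
    (\sum_i F i).1 = \sum_i (F i).1.
  by move=> I F; apply: (big_morph fst) => //.
have [a ha] := choice (fun j : 'I_n => pre (delta_mx 0 j)).
pose s (r : 'rV[R]_n) := \sum_j r 0 j *: a j.
have sN : forall r, N (s r) by move=> r; apply: NS => j; apply: NZ; exact: (ha j).1.
have sfst : forall r, (s r).1 = r.
  move=> r; rewrite fstS [RHS]row_sum_delta; apply: eq_bigr => j _ /=.
  by rewrite (ha j).2.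
have slin : islin s.
  move=> c u v; rewrite /s scaler_sumr -big_split; apply: eq_bigr => j _ /=.
  by rewrite !mxE scalerDl scalerA.
split.
  split.
    exists (s (const_mx 1)).
      split => //; rewrite /Cquad /= sfst => i; rewrite mxE; exact: ler01.
    exists 1 => // y Ny hy i.
    have hm : `|(y - s (const_mx 1)).1| <= Enrm nrm 0 (y - s (const_mx 1)).
      by rewrite /Enrm le_max lexx.
    have := le_lt_trans (entry_le _ i) (le_lt_trans hm hy).
    rewrite /= sfst !mxE ltr_norml => /andP[h _].
    by apply: ltW; rewrite -(ltrD2r (-1)) add0r.
  exists N'; split => //; exists 1 => // u v Nu N'v _.
  by rewrite /Cquad /= (N'fst _ N'v) addr0.
pose M : 'M[R]_(d0, n) := \matrix_(i, j) (b i).1 0 j.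
pose B (c : 'rV[R]_d0) := \sum_i c 0 i *: b i.
have BN : forall c, N (B c) by move=> c; rewrite hNb; exists (fun i => c 0 i).
have Bfst : forall c, (B c).1 = c *m M.
  move=> c; apply/matrixP => i j; rewrite fstS summxE !mxE.
  by apply: eq_bigr => k _; rewrite !mxE (ord1 i).
have Blin : islin B.
  move=> c u v; rewrite /B scaler_sumr -big_split; apply: eq_bigr => j _ /=.
  by rewrite !mxE scalerDl scalerA.
pose g (u : 'rV[R]_d0) := B (u *m kermx M).
have glin : islin g.
  by move=> c u v; rewrite /g mulmxDl -scalemxAl Blin.
have gK : forall x, (exists u, x = g u) <-> N x /\ x.1 = 0.
  move=> x; split.
    move=> [u ->]; split; first exact: BN.
    by rewrite Bfst -mulmxA mulmx_ker mulmx0.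
  move=> [Nx x0]; move: (Nx); rewrite hNb => -[c xc].
  have xB : x = B (\row_i c i).
    by rewrite xc /B; apply: eq_bigr => i _; rewrite mxE.
  have : (\row_i c i <= kermx M)%MS.
    by apply/sub_kermxP; rewrite -Bfst -xB.
  by move=> /submxP [D hD]; exists D; rewrite xB hD.
have [dK [LK [LKlin LKinj LKim]]] := basis_lemma glin.
have LKN : forall z, N (LK z) /\ (LK z).1 = 0.
  by move=> z; apply/gK/LKim; exists z.
pose L (w : 'rV[R]_(n + dK)) := s (lsubmx w) + LK (rsubmx w).
have Lfst : forall w, (L w).1 = lsubmx w.
  by move=> w; rewrite /L /= sfst (LKN _).2 addr0.
have LN : forall w, N (L w) by move=> w; apply: ND => //; exact: (LKN _).1.
have Llin : islin L.
  move=> c u v; rewrite /L.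
  have -> : rsubmx (c *: u + v) = c *: rsubmx u + rsubmx v.
    by apply/matrixP => i j; rewrite !mxE.
  have -> : lsubmx (c *: u + v) = c *: lsubmx u + lsubmx v.
    by apply/matrixP => i j; rewrite !mxE.
  by rewrite slin LKlin scalerDr addrACA.
exists (n + dK)%N, n, L; split => //.
- exact: leq_addr.
- move=> u v Luv; apply/eqP; rewrite -subr_eq0; apply/eqP.
  have : L (u - v) = 0 by rewrite (linB Llin) Luv subrr.
  move: (u - v) => w Lw.
  have l0 : lsubmx w = 0 by rewrite -Lfst Lw.
  move: Lw; rewrite /L l0 (lin0 slin) add0r -(lin0 LKlin) => /LKinj r0.
  by rewrite -(hsubmxK w) l0 r0 row_mx0.
- apply/seteqP; split => [x [w _ <-] | x Nx] //.
  have [z hz] : exists z, x - s x.1 = LK z.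
    apply/LKim/gK; split; first by rewrite -scaleN1r addrC; apply: Nlin.
    by rewrite /= sfst subrr.
  exists (row_mx x.1 z) => //; rewrite /L row_mxKl row_mxKr -hz.
  by rewrite addrC subrK.
- apply/seteqP; split => [x [Cx Nx] | x [w hw <-]].
  + have [z hz] : exists z, x - s x.1 = LK z.
      apply/LKim/gK; split; first by rewrite -scaleN1r addrC; apply: Nlin.
      by rewrite /= sfst subrr.
    exists (row_mx x.1 z).
      move=> i /= ilt.
      have -> : row_mx x.1 z 0 i = x.1 0 (Ordinal ilt).
        by rewrite -(row_mxEl x.1 z); congr (row_mx _ _ _ _); apply: val_inj.
      exact: Cx.
    by rewrite /L row_mxKl row_mxKr -hz addrC subrK.
  + split; last exact: LN.
    move=> j; have := Lfst w; move=> /= ->; rewrite mxE.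
    by apply: hw; rewrite /= ltn_ord.
Qed.
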